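(* Let $b(x)=\frac{x-i}{x+i}$, $\Lambda=\operatorname{diag}(b,b^{-1})$, $\Lambda^+=\operatorname{diag}(b,1)$, $\Lambda^-=\operatorname{diag}(1,b^{-1})$, and for real $\varepsilon$ let $$G_\varepsilon(x)=\begin{pmatrix}\frac{x^2+xi(-18+8e^{i\varepsilon x}+8e^{-i\varepsilon x})-1}{x^2+1}&\frac{xi(24-12e^{i\varepsilon x}-12e^{-i\varepsilon x})}{x^2+1}\\[1mm] \frac{xi(-12+4e^{i\varepsilon x}+8e^{-i\varepsilon x})}{x^2+1}&\frac{x^2+xi(18-8e^{i\varepsilon x}-8e^{-i\varepsilon x})-1}{x^2+1}\end{pmatrix},$$ so that $G_0=\Lambda$. Then for each $\varepsilon\in(0,1]$ there exist $2\times2$ matrix functions $N^\pm_\varepsilon$, continuous and bounded on $\overline{\Pi^\pm}$ and analytic in $\Pi^\pm$, such that $\Lambda^+(x)N^+_\varepsilon(x)+N^-_\varepsilon(x)\Lambda^-(x)=G_\varepsilon(x)-\Lambda(x)$ for all $x\in\mathbb{R}$ and $\sup_{\overline{\Pi^\pm}}|N^\pm_\varepsilon|=O(\varepsilon)$ as $\varepsilon\to0$. Consequently $\sup_{x\in\mathbb{R}}\big\|G_\varepsilon(x)-\big(I+N^-_\varepsilon(\Lambda^+)^{-1}\big)\Lambda\big(I+(\Lambda^-)^{-1}N^+_\varepsilon\big)\big\|=O(\varepsilon^2)$, and for small $\varepsilon$ the two outer factors are invertible with bounded inverses on $\overline{\Pi^-}$, $\overline{\Pi^+}$ respectively, so this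 product is a factorization with partial indices $1,-1$.
   Context: $\Pi^+=\{\operatorname{Im}z>0\}$, $\Pi^-=\{\operatorname{Im}z<0\}$; $I$ is the $2\times2$ identity matrix. The matrix $\Lambda$ has a right factorization with trivial factors $G_0^\pm=I$ and partial indices $\varkappa_1=1$, $\varkappa_2=-1$. *)

(* Defs.v *)
From Stdlib Require Import Reals Lra.
Open Scope R_scope.

Definition Cx : Type := (R * R)%type.
Definition Re (z : Cx) : R := fst z.
Definition Im (z : Cx) : R := snd z.
Definition RtoC (a : R) : Cx := (a, 0).
Definition C0 : Cx := (0, 0).
Definition C1 : Cx := (1, 0).
Definition Ci : Cx := (0, 1).
Definition Cadd (z w : Cx) : Cx := (Re z + Re w, Im z + Im w).
Definition Copp (z : Cx) : Cx := (- Re z, - Im z).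
Definition Csub (z w : Cx) : Cx := Cadd z (Copp w).
Definition Cmul (z w : Cx) : Cx :=
  (Re z * Re w - Im z * Im w, Re z * Im w + Im z * Re w).
Definition Cinv (z : Cx) : Cx :=
  (Re z / (Re z ^ 2 + Im z ^ 2), - Im z / (Re z ^ 2 + Im z ^ 2)).
Definition Cdiv (z w : Cx) : Cx := Cmul z (Cinv w).
Definition Cmod (z : Cx) : R := sqrt (Re z ^ 2 + Im z ^ 2).
Definition Cexpi (t : R) : Cx := (cos t, sin t).

Definition upper_open (z : Cx) : Prop := 0 < Im z.
Definition lower_open (z : Cx) : Prop := Im z < 0.
Definition upper_closed (z : Cx) : Prop := 0 <= Im z.
Definition lower_closed (z : Cx) : Prop := Im z <= 0.

Record M2 : Type := mkM2 { m11 : Cx; m12 : Cx; m21 : Cx; m22 : Cx }.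
Definition M2id : M2 := mkM2 C1 C0 C0 C1.
Definition M2diag (a d : Cx) : M2 := mkM2 a C0 C0 d.
Definition M2add (A B : M2) : M2 :=
  mkM2 (Cadd (m11 A) (m11 B)) (Cadd (m12 A) (m12 B))
       (Cadd (m21 A) (m21 B)) (Cadd (m22 A) (m22 B)).
Definition M2sub (A B : M2) : M2 :=
  mkM2 (Csub (m11 A) (m11 B)) (Csub (m12 A) (m12 B))
       (Csub (m21 A) (m21 B)) (Csub (m22 A) (m22 B)).
Definition M2mul (A B : M2) : M2 :=
  mkM2 (Cadd (Cmul (m11 A) (m11 B)) (Cmul (m12 A) (m21 B)))
       (Cadd (Cmul (m11 A) (m12 B)) (Cmul (m12 A) (m22 B)))
       (Cadd (Cmul (m21 A) (m11 B)) (Cmul (m22 A) (m21 B)))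
       (Cadd (Cmul (m21 A) (m12 B)) (Cmul (m22 A) (m22 B))).
Definition M2det (A : M2) : Cx :=
  Csub (Cmul (m11 A) (m22 A)) (Cmul (m12 A) (m21 A)).
(* inverse via the adjugate (meaningful when det <> 0) *)
Definition M2inv (A : M2) : M2 :=
  let d := Cinv (M2det A) in
  mkM2 (Cmul d (m22 A)) (Cmul d (Copp (m12 A)))
       (Cmul d (Copp (m21 A))) (Cmul d (m11 A)).
(* matrix norm: maximum modulus of the entries (equivalent to any other
   norm on 2x2 matrices, so O(.) statements are unaffected) *)
Definition M2norm (A : M2) : R :=
  Rmax (Rmax (Cmod (m11 A)) (Cmod (m12 A))) (Rmax (Cmod (m21 A)) (Cmod (m22 A))).

Definition Ccont_on (D : Cx -> Prop) (f : Cx -> Cx) : Prop :=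
  forall z, D z -> forall e, 0 < e -> exists d, 0 < d /\
    forall w, D w -> Cmod (Csub w z) < d -> Cmod (Csub (f w) (f z)) < e.
Definition Cholo_on (D : Cx -> Prop) (f : Cx -> Cx) : Prop :=
  forall z, D z -> exists l : Cx, forall e, 0 < e -> exists d, 0 < d /\
    forall h : Cx, h <> C0 -> Cmod h < d ->
      Cmod (Csub (Cdiv (Csub (f (Cadd z h)) (f z)) h) l) < e.
Definition M2entrywise (P : (Cx -> Cx) -> Prop) (F : Cx -> M2) : Prop :=
  P (fun z => m11 (F z)) /\ P (fun z => m12 (F z)) /\
  P (fun z => m21 (F z)) /\ P (fun z => m22 (F z)).
Definition M2bounded_on (D : Cx -> Prop) (F : Cx -> M2) : Prop :=
  exists M, forall z, D z -> M2norm (F z) <= M.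
Definition M2_good (Do Dc : Cx -> Prop) (F : Cx -> M2) : Prop :=
  M2entrywise (Ccont_on Dc) F /\ M2bounded_on Dc F /\ M2entrywise (Cholo_on Do) F.

Definition b (z : Cx) : Cx := Cdiv (Csub z Ci) (Cadd z Ci).
Definition Lam (z : Cx) : M2 := M2diag (b z) (Cinv (b z)).
Definition Lamp (z : Cx) : M2 := M2diag (b z) C1.
Definition Lamm (z : Cx) : M2 := M2diag C1 (Cinv (b z)).

Definition Geps (eps x : R) : M2 :=
  let X := RtoC x in
  let e1 := Cexpi (eps * x) in
  let e2 := Cexpi (- (eps * x)) in
  let den := RtoC (x ^ 2 + 1) in
  let xi := Cmul X Ci in
  let lin (a c1 c2 : R) : Cx :=
    Cadd (RtoC a) (Cadd (Cmul (RtoC c1) e1) (Cmul (RtoC c2) e2)) in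
  mkM2
    (Cdiv (Csub (Cadd (RtoC (x ^ 2)) (Cmul xi (lin (-18) 8 8))) C1) den)
    (Cdiv (Cmul xi (lin 24 (-12) (-12))) den)
    (Cdiv (Cmul xi (lin (-12) 4 8)) den)
    (Cdiv (Csub (Cadd (RtoC (x ^ 2)) (Cmul xi (lin 18 (-8) (-8)))) C1) den).

(* Main.v *)
From Pilot Require Import Defs.
From Stdlib Require Import Reals Lra ZArith.
From Coquelicot Require Import Coquelicot.
Open Scope R_scope.

Lemma Cmod_norm_C (x : C) : @norm C_AbsRing C_NormedModule x = Cmod x.
Proof. reflexivity. Qed.

Lemma small_of_isd (f : C -> C) z l : @is_derive C_AbsRing (AbsRing_NormedModule C_AbsRing) f z l ->
  forall eps, 0 < eps -> exists d, 0 < d /\ forall h, Cmod h < d ->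
    Cmod (f (z+h) - f z - h*l)%C <= eps * Cmod h.
Proof.
  intros [_ Hd] eps Heps.
  specialize (Hd z (fun P HP => HP) (mkposreal eps Heps)).
  destruct Hd as [d Hd].
  exists d; split; [apply cond_pos|].
  intros h Hh.
  assert (B : ball z d (z+h)%C).
  { apply (norm_compat1 (V:=AbsRing_NormedModule C_AbsRing)). simpl.
    eapply Rle_lt_trans; [|exact Hh]. right.
    change (Cmod ((z+h) - z)%C = Cmod h). f_equal. ring. }
  specialize (Hd _ B).
  change (Cmod (f (z+h) - f z - (z+h-z)*l)%C <= eps * Cmod ((z+h)-z)%C) in Hd.
  replace ((z+h)-z)%C with h in Hd by ring. exact Hd.
Qed.

Lemma isd_of_small (f : C -> C) z l :
  (forall eps, 0 < eps -> exists d, 0 < d /\ forall h, Cmod h < d ->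
    Cmod (f (z+h) - f z - h*l)%C <= eps * Cmod h) -> @is_derive C_AbsRing (AbsRing_NormedModule C_AbsRing) f z l.
Proof.
  intros H. split; [apply is_linear_scal_l|].
  intros x Hx. apply (is_filter_lim_locally_unique (V:=AbsRing_NormedModule C_AbsRing)) in Hx. subst x.
  intros eps. destruct (H eps (cond_pos eps)) as [d [Hd Hh]].
  assert (Hnf : 0 < @norm_factor _ (AbsRing_NormedModule C_AbsRing)) by apply norm_factor_gt_0.
  exists (mkposreal (d / @norm_factor _ (AbsRing_NormedModule C_AbsRing)) (Rdiv_lt_0_compat _ _ Hd Hnf)).
  intros y By.
  apply (norm_compat2 (V:=AbsRing_NormedModule C_AbsRing)) in By. simpl in By.
  set (nf := @norm_factor _ (AbsRing_NormedModule C_AbsRing)) in *.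
  change (Cmod (y - z)%C < nf * (d / nf)) in By.
  replace (nf * (d / nf)) with d in By by (field; lra).
  specialize (Hh _ By).
  assert (Ey : (z + (y - z))%C = (y:C)) by (change (z + (y - z) = y)%C; ring).
  rewrite Ey in Hh.
  change (Cmod (f y - f z - (y-z)*l)%C <= eps * Cmod (y - z)%C). exact Hh.
Qed.

Definition hol (f : C -> C) (z : C) : Prop := exists l, @is_derive C_AbsRing (AbsRing_NormedModule C_AbsRing) f z l.

Lemma hol_const (c z : C) : hol (fun _ => c) z.
Proof. exists zero. apply (is_derive_const (K:=C_AbsRing)). Qed.

Lemma hol_id (z : C) : hol (fun w => w) z.
Proof. exists one. exact (is_derive_id (K:=C_AbsRing) z). Qed.

Lemma hol_plus f g z : hol f z -> hol g z -> hol (fun w => f w + g w)%C z.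
Proof. intros [a Ha] [b Hb]. exists (plus a b).
  exact (is_derive_plus (K:=C_AbsRing) (V:=AbsRing_NormedModule C_AbsRing)  f g z a b Ha Hb). Qed.

Lemma hol_mult f g z : hol f z -> hol g z -> hol (fun w => f w * g w)%C z.
Proof. intros [a Ha] [b Hb]. eexists.
  exact (is_derive_mult (K:=C_AbsRing) f g z a b Ha Hb Cmult_comm). Qed.

Lemma hol_comp f g z : hol f (g z) -> hol g z -> hol (fun w => f (g w)) z.
Proof. intros [a Ha] [b Hb]. eexists.
  exact (is_derive_comp (K:=C_AbsRing) (V:=AbsRing_NormedModule C_AbsRing)  f g z a b Ha Hb). Qed.

Lemma hol_opp f z : hol f z -> hol (fun w => - f w)%C z.
Proof. intros Hf.
  assert (H := hol_mult (fun _ => (-1)%C) f z (hol_const _ _) Hf).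
  destruct H as [l Hl]. exists l. eapply is_derive_ext; [|exact Hl].
  intros t. simpl. ring. Qed.

Lemma hol_minus f g z : hol f z -> hol g z -> hol (fun w => f w - g w)%C z.
Proof. intros Hf Hg. apply hol_plus; [exact Hf| apply hol_opp; exact Hg]. Qed.

Definition nfC := @norm_factor _ (AbsRing_NormedModule C_AbsRing).
Lemma nfC_pos : 0 < nfC.
Proof. apply norm_factor_gt_0. Qed.

Lemma ball_Cmod (z y : C) (e : R) (He : 0 < e) :
  ball (M:=AbsRing_UniformSpace C_AbsRing) z (e / nfC) y -> Cmod (y - z)%C < e.
Proof.
  intros B. assert (Hp : 0 < e / nfC) by (apply Rdiv_lt_0_compat; [lra|apply nfC_pos]).
  assert (B' : ball (M:=AbsRing_UniformSpace C_AbsRing) z (mkposreal _ Hp) y) by exact B.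
  apply (norm_compat2 (V:=AbsRing_NormedModule C_AbsRing)) in B'. simpl in B'.
  change (Cmod (y - z)%C < nfC * (e / nfC)) in B'.
  replace (nfC * (e / nfC)) with e in B' by (field; generalize nfC_pos; lra). exact B'.
Qed.

Lemma Cmod_ball (z y : C) (e : R) :
  Cmod (y - z)%C < e -> ball (M:=AbsRing_UniformSpace C_AbsRing) z e y.
Proof.
  intros H. apply (norm_compat1 (V:=AbsRing_NormedModule C_AbsRing)). exact H.
Qed.

Lemma hol_ext_loc f g z : (exists d, 0 < d /\ forall w, Cmod (w - z) < d -> f w = g w)%C ->
  hol f z -> hol g z.
Proof.
  intros [d [Hd E]] [l Hl]. exists l. eapply is_derive_ext_loc; [|exact Hl].
  assert (Hp : 0 < d / nfC) by (apply Rdiv_lt_0_compat; [lra|apply nfC_pos]).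
  exists (mkposreal _ Hp). intros y By. apply E. apply ball_Cmod; auto.
Qed.

Lemma hol_continuous f z : hol f z -> forall e, 0 < e -> exists d, 0 < d /\ forall w, Cmod (w - z)%C < d -> Cmod (f w - f z)%C < e.
Proof.
  intros [l Hl] e He.
  destruct (small_of_isd f z l Hl 1 Rlt_0_1) as [d [Hd Hs]].
  assert (Hl0 := Cmod_ge_0 l).
  exists (Rmin d (e / (2 + Cmod l))). split.
  { apply Rmin_glb_lt; [lra|apply Rdiv_lt_0_compat; lra]. }
  intros w Hw.
  set (h := (w - z)%C).
  assert (Ew : w = (z + h)%C) by (unfold h; ring). rewrite Ew.
  assert (Hh1 : Cmod h < d) by (eapply Rlt_le_trans; [exact Hw|apply Rmin_l]).
  assert (Hh2 : Cmod h < e / (2 + Cmod l)) by (eapply Rlt_le_trans; [exact Hw|apply Rmin_r]).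
  specialize (Hs h Hh1).
  replace (f (z + h)%C - f z)%C with ((f (z + h)%C - f z - h * l) + h * l)%C by ring.
  eapply Rle_lt_trans; [apply Cmod_triangle|].
  rewrite Cmod_mult.
  assert (Hh0 := Cmod_ge_0 h).
  apply Rmult_lt_compat_r with (r := 2 + Cmod l) in Hh2; [|lra].
  replace (e / (2 + Cmod l) * (2 + Cmod l)) with e in Hh2 by (field; lra).
  nra.
Qed.

Lemma Cmod_sub_lb (z h : C) : Cmod z - Cmod h <= Cmod (z + h)%C.
Proof.
  assert (E : z = ((z + h) + - h)%C) by ring.
  assert (H := Cmod_triangle (z+h)%C (-h)%C). rewrite <- E, Cmod_opp in H. lra.
Qed.

Lemma hol_inv_id (z : C) : z <> 0%C -> hol (fun w => / w)%C z.
Proof.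
  intros Hz. exists (- / (z * z))%C. apply isd_of_small.
  intros eps Heps.
  assert (Hm : 0 < Cmod z) by (apply Cmod_gt_0; exact Hz).
  exists (Rmin (Cmod z / 2) (eps * (Cmod z * Cmod z * Cmod z) / 2)). split.
  { apply Rmin_glb_lt; [lra|]. apply Rdiv_lt_0_compat; [|lra].
    apply Rmult_lt_0_compat; [lra|]. repeat apply Rmult_lt_0_compat; lra. }
  intros h Hh.
  assert (Hh1 : Cmod h < Cmod z / 2) by (eapply Rlt_le_trans; [exact Hh|apply Rmin_l]).
  assert (Hh2 : Cmod h < eps * (Cmod z * Cmod z * Cmod z) / 2) by (eapply Rlt_le_trans; [exact Hh|apply Rmin_r]).
  assert (Hzh := Cmod_sub_lb z h).
  assert (Hzh0 : (z + h)%C <> 0%C).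
  { intro E. rewrite E in Hzh. rewrite Cmod_0 in Hzh. lra. }
  replace (/ (z + h) - / z - h * - / (z * z))%C with (h * h / (z * z * (z + h)))%C
    by (field; split; auto).
  rewrite Cmod_div by (apply Cmult_neq_0; [apply Cmult_neq_0|]; auto).
  rewrite !Cmod_mult.
  assert (H0 := Cmod_ge_0 h).
  apply Rle_div_l. { apply Rmult_lt_0_compat; [apply Rmult_lt_0_compat|]; lra. }
  assert (Cmod h * Cmod h <= Cmod h * (eps * (Cmod z * Cmod z * Cmod z) / 2)) by (apply Rmult_le_compat_l; lra).
  assert (eps * Cmod h * (Cmod z * Cmod z * (Cmod z / 2)) <= eps * Cmod h * (Cmod z * Cmod z * Cmod (z + h))).
  { apply Rmult_le_compat_l. nra. apply Rmult_le_compat_l. nra. lra. }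
  nra.
Qed.

Lemma hol_inv f z : hol f z -> f z <> 0%C -> hol (fun w => / f w)%C z.
Proof. intros Hf Hz. apply (hol_comp (fun w => / w)%C f); [apply hol_inv_id; auto|auto]. Qed.

Lemma hol_div f g z : hol f z -> hol g z -> g z <> 0%C -> hol (fun w => f w / g w)%C z.
Proof. intros Hf Hg Hz. apply (hol_mult f (fun w => / g w)%C); auto. apply hol_inv; auto. Qed.

Definition cexp (z : C) : C := (exp (fst z) * cos (snd z), exp (fst z) * sin (snd z)).

Lemma cexp_add z w : cexp (z + w)%C = (cexp z * cexp w)%C.
Proof.
  destruct z as [a b], w as [c d]. unfold cexp. simpl.
  rewrite exp_plus, cos_plus, sin_plus. unfold Cmult; simpl. f_equal; ring.
Qed.

Lemma cexp_0 : cexp 0%C = 1%C.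
Proof. unfold cexp. simpl. rewrite exp_0, cos_0, sin_0. apply injective_projections; simpl; ring. Qed.

Lemma Cmod_cexp z : Cmod (cexp z) = exp (fst z).
Proof.
  destruct z as [a b]. unfold Cmod, cexp. cbn [fst snd].
  assert (E : (exp a * cos b) ^ 2 + (exp a * sin b) ^ 2 = exp a * exp a).
  { replace ((exp a * cos b) ^ 2 + (exp a * sin b) ^ 2) with (exp a * exp a * (Rsqr (sin b) + Rsqr (cos b))) by (unfold Rsqr; ring).
    rewrite sin2_cos2. ring. }
  rewrite E. apply sqrt_square. apply Rlt_le, exp_pos.
Qed.

Lemma CS_ineq x1 x2 y1 y2 : x1 * y1 + x2 * y2 <= sqrt (x1^2 + x2^2) * sqrt (y1^2 + y2^2).
Proof.
  rewrite <- sqrt_mult by nra.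
  apply Rsqr_incr_0_var.
  - rewrite Rsqr_sqrt by nra. unfold Rsqr. assert (H := pow2_ge_0 (x1*y2 - x2*y1)). nra.
  - apply sqrt_pos.
Qed.

Lemma ray_mvt (g dg : R -> C) M :
  (forall t, derivable_pt_lim (fun s => fst (g s)) t (fst (dg t))) ->
  (forall t, derivable_pt_lim (fun s => snd (g s)) t (snd (dg t))) ->
  (forall t, 0 <= t <= 1 -> Cmod (dg t) <= M) -> Cmod (g 1 - g 0)%C <= M.
Proof.
  intros H1 H2 HM.
  set (c := (g 1 - g 0)%C).
  set (psi := fun s => fst c * fst (g s) + snd c * snd (g s)).
  destruct (MVT_cor2 psi (fun s => fst c * fst (dg s) + snd c * snd (dg s)) 0 1 Rlt_0_1) as [tau [Ht Hint]].
  { intros t _. unfold psi.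
    apply (derivable_pt_lim_plus (fun s => fst c * fst (g s)) (fun s => snd c * snd (g s))).
    - apply (derivable_pt_lim_scal (fun s => fst (g s))). apply H1.
    - apply (derivable_pt_lim_scal (fun s => snd (g s))). apply H2. }
  assert (Hc2 : psi 1 - psi 0 = fst c ^ 2 + snd c ^ 2).
  { unfold psi, c. simpl. ring. }
  rewrite Hc2, Rminus_0_r, Rmult_1_r in Ht.
  assert (HCS := CS_ineq (fst c) (snd c) (fst (dg tau)) (snd (dg tau))).
  assert (HMt : Cmod (dg tau) <= M) by (apply HM; lra).
  unfold Cmod in *. fold c.
  set (A := sqrt (fst c ^ 2 + snd c ^ 2)) in *.
  set (B := sqrt (fst (dg tau) ^ 2 + snd (dg tau) ^ 2)) in *.
  assert (HA2 : A * A = fst c ^ 2 + snd c ^ 2) by (apply sqrt_sqrt; nra).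
  assert (HA0 : 0 <= A) by apply sqrt_pos.
  assert (HB0 : 0 <= B) by apply sqrt_pos.
  nra.
Qed.

Lemma im_le_Cmod (c : C) : Rabs (snd c) <= Cmod c.
Proof.
  destruct c as [x y]. unfold Cmod. cbn [fst snd].
  rewrite <- sqrt_Rsqr_abs. apply sqrt_le_1_alt. unfold Rsqr. nra.
Qed.

Lemma ray_deriv (F : C -> C) l h t0 :
  @is_derive C_AbsRing (AbsRing_NormedModule C_AbsRing) F (RtoC t0 * h)%C l ->
  derivable_pt_lim (fun t => fst (F (RtoC t * h)%C)) t0 (fst (h * l)%C) /\
  derivable_pt_lim (fun t => snd (F (RtoC t * h)%C)) t0 (snd (h * l)%C).
Proof.
  intros Hd.
  assert (Hh0 := Cmod_ge_0 h).
  assert (key : forall eps, 0 < eps -> exists delta : posreal, forall dt, dt <> 0 -> Rabs dt < delta ->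
     Cmod (F (RtoC (t0 + dt) * h)%C - F (RtoC t0 * h)%C - RtoC dt * (h * l))%C <= eps / 2 * Rabs dt).
  { intros eps Heps.
    destruct (small_of_isd F _ l Hd (eps / 2 / (Cmod h + 1))) as [d [Hd0 Hs]].
    { apply Rdiv_lt_0_compat; lra. }
    assert (Hp : 0 < d / (Cmod h + 1)) by (apply Rdiv_lt_0_compat; lra).
    exists (mkposreal _ Hp). intros dt Hdt Hdt2. simpl in Hdt2.
    assert (E : (RtoC (t0 + dt) * h)%C = (RtoC t0 * h + RtoC dt * h)%C).
    { rewrite RtoC_plus. ring. }
    rewrite E.
    assert (HH : Cmod (RtoC dt * h)%C < d).
    { rewrite Cmod_mult, Cmod_R.
      apply Rmult_lt_compat_r with (r := Cmod h + 1) in Hdt2; [|lra].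
      replace (d / (Cmod h + 1) * (Cmod h + 1)) with d in Hdt2 by (field; lra).
      assert (0 <= Rabs dt) by apply Rabs_pos. nra. }
    specialize (Hs _ HH).
    replace (RtoC dt * (h * l))%C with (RtoC dt * h * l)%C by ring.
    eapply Rle_trans; [exact Hs|]. rewrite Cmod_mult, Cmod_R.
    assert (0 <= Rabs dt) by apply Rabs_pos.
    assert (Cmod h <= Cmod h + 1) by lra.
    apply Rle_trans with (eps / 2 / (Cmod h + 1) * (Rabs dt * (Cmod h + 1))).
    { apply Rmult_le_compat_l; [apply Rlt_le, Rdiv_lt_0_compat; lra|]. apply Rmult_le_compat_l; lra. }
    right. field. lra. }
  split; intros eps Heps; destruct (key eps Heps) as [delta Hdl]; exists delta;
    intros dt Hdt Hdt2; specialize (Hdl dt Hdt Hdt2);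
    set (X := (F (RtoC (t0 + dt) * h)%C - F (RtoC t0 * h)%C - RtoC dt * (h * l))%C) in *.
  - assert (EX : (fst (F (RtoC (t0 + dt) * h)%C) - fst (F (RtoC t0 * h)%C)) / dt - fst (h * l)%C = fst X / dt).
    { unfold X. simpl. field. auto. }
    rewrite EX. unfold Rdiv. rewrite Rabs_mult, Rabs_inv.
    assert (HX := re_le_Cmod X). unfold Re in HX.
    assert (Hp : 0 < Rabs dt) by (apply Rabs_pos_lt; auto).
    apply Rle_lt_trans with (eps / 2 * Rabs dt * / Rabs dt).
    { apply Rmult_le_compat_r; [apply Rlt_le, Rinv_0_lt_compat; auto|lra]. }
    replace (eps / 2 * Rabs dt * / Rabs dt) with (eps / 2) by (field; lra). lra.
  - assert (EX : (snd (F (RtoC (t0 + dt) * h)%C) - snd (F (RtoC t0 * h)%C)) / dt - snd (h * l)%C = snd X / dt).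
    { unfold X. simpl. field. auto. }
    rewrite EX. unfold Rdiv. rewrite Rabs_mult, Rabs_inv.
    assert (HX := im_le_Cmod X).
    assert (Hp : 0 < Rabs dt) by (apply Rabs_pos_lt; auto).
    apply Rle_lt_trans with (eps / 2 * Rabs dt * / Rabs dt).
    { apply Rmult_le_compat_r; [apply Rlt_le, Rinv_0_lt_compat; auto|lra]. }
    replace (eps / 2 * Rabs dt * / Rabs dt) with (eps / 2) by (field; lra). lra.
Qed.

Lemma exp_mono x y : x <= y -> exp x <= exp y.
Proof. intros H. destruct (Req_dec x y) as [->|Hn]; [lra|]. apply Rlt_le, exp_increasing. lra. Qed.

Lemma dpl_ext f g x l l' : (forall t, f t = g t) -> l = l' -> derivable_pt_lim f x l -> derivable_pt_lim g x l'.
Proof.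
  intros E El H eps He. destruct (H eps He) as [d Hd]. exists d. intros h H1 H2.
  rewrite <- !E, <- El. apply Hd; auto.
Qed.

Lemma isd_eq (f : C -> C) x l l' : @is_derive C_AbsRing (AbsRing_NormedModule C_AbsRing) f x l -> l = l' ->
  @is_derive C_AbsRing (AbsRing_NormedModule C_AbsRing) f x l'.
Proof. intros H ->. exact H. Qed.

Fixpoint Tp (n : nat) (h : C) : C :=
  match n with O => 0%C | S m => (Tp m h + Cpow h m / RtoC (INR (Factorial.fact m)))%C end.
Definition Rm (n : nat) (h : C) : C := (cexp h - Tp n h)%C.

Lemma isd_pow (n : nat) (p : C) :
  @is_derive C_AbsRing (AbsRing_NormedModule C_AbsRing) (fun z => Cpow z (S n)) p (RtoC (INR (S n)) * Cpow p n)%C.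
Proof.
  induction n.
  - eapply isd_eq. eapply is_derive_ext; [|exact (is_derive_id (K:=C_AbsRing) p)].
    intros t. exact (eq_sym (Cpow_1_r t)). change (RtoC 1 = (RtoC (INR 1) * Cpow p 0)%C). replace (INR 1) with 1 by reflexivity. replace (Cpow p 0) with (RtoC 1) by reflexivity. ring.
  - eapply isd_eq.
    eapply is_derive_ext; [|exact (is_derive_mult (K:=C_AbsRing) (fun z => z) (fun z => Cpow z (S n)) p _ _ (is_derive_id (K:=C_AbsRing) p) IHn Cmult_comm)].
    intros t. reflexivity.
    change one with (RtoC 1). change (plus ?a ?b) with (a + b)%C. change (mult ?a ?b) with (a * b)%C.
    rewrite (S_INR (S n)), RtoC_plus. simpl. ring.
Qed.

Lemma isd_plus (f g : C -> C) x a b :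
  @is_derive C_AbsRing (AbsRing_NormedModule C_AbsRing) f x a ->
  @is_derive C_AbsRing (AbsRing_NormedModule C_AbsRing) g x b ->
  @is_derive C_AbsRing (AbsRing_NormedModule C_AbsRing) (fun z => f z + g z)%C x (a + b)%C.
Proof. intros Ha Hb. exact (is_derive_plus (K:=C_AbsRing) (V:=AbsRing_NormedModule C_AbsRing) f g x a b Ha Hb). Qed.

Lemma isd_mult (f g : C -> C) x a b :
  @is_derive C_AbsRing (AbsRing_NormedModule C_AbsRing) f x a ->
  @is_derive C_AbsRing (AbsRing_NormedModule C_AbsRing) g x b ->
  @is_derive C_AbsRing (AbsRing_NormedModule C_AbsRing) (fun z => f z * g z)%C x (a * g x + f x * b)%C.
Proof. intros Ha Hb. exact (is_derive_mult (K:=C_AbsRing) f g x a b Ha Hb Cmult_comm). Qed.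

Lemma isd_const (c x : C) : @is_derive C_AbsRing (AbsRing_NormedModule C_AbsRing) (fun _ => c) x (RtoC 0).
Proof. eapply isd_eq. exact (is_derive_const (K:=C_AbsRing) (V:=AbsRing_NormedModule C_AbsRing) c x). reflexivity. Qed.

Lemma isd_divc (f : C -> C) x a c :
  @is_derive C_AbsRing (AbsRing_NormedModule C_AbsRing) f x a ->
  @is_derive C_AbsRing (AbsRing_NormedModule C_AbsRing) (fun z => f z / c)%C x (a / c)%C.
Proof.
  intros Ha. eapply isd_eq. apply (isd_mult f (fun _ => / c)%C x a (RtoC 0) Ha (isd_const _ _)).
  change ((a * / c + f x * 0) = a / c)%C. unfold Cdiv. ring.
Qed.

Lemma isd_Tp (n : nat) (p : C) :
  @is_derive C_AbsRing (AbsRing_NormedModule C_AbsRing) (Tp (S n)) p (Tp n p).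
Proof.
  induction n.
  - eapply isd_eq. eapply is_derive_ext; [|exact (isd_const (RtoC 1) p)].
    intros t. simpl. change (RtoC 1 = 0 + RtoC 1 / RtoC 1)%C. field.
    reflexivity.
  - eapply isd_eq.
    eapply is_derive_ext; [|exact (isd_plus _ _ p _ _ IHn (isd_divc _ p _ (RtoC (INR (Factorial.fact (S n)))) (isd_pow n p)))].
    intros t. reflexivity.
    change (Tp n p + RtoC (INR (S n)) * p ^ n / RtoC (INR (Factorial.fact (S n))) = Tp n p + p ^ n / RtoC (INR (Factorial.fact n)))%C.
    rewrite fact_simpl, mult_INR, RtoC_mult. field. split.
    + intro E. apply (INR_fact_neq_0 n). injection E. auto.
    + intro E. apply (not_0_INR (S n)). auto. injection E. auto.
Qed.

Lemma Tp_0 n : Tp (S n) 0%C = 1%C.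
Proof.
  induction n.
  - simpl. change (0 + RtoC 1 / RtoC 1 = RtoC 1)%C. field.
  - change (Tp (S n) 0 + Cpow 0 (S n) / RtoC (INR (Factorial.fact (S n))) = 1)%C.
    rewrite IHn. simpl. change (RtoC 1 + 0 * Cpow 0 n / RtoC (INR (Factorial.fact (S n))) = RtoC 1)%C.
    unfold Cdiv. ring.
Qed.

Lemma cexp_ray (h : C) t0 :
  derivable_pt_lim (fun t => fst (cexp (RtoC t * h)%C)) t0 (fst (h * cexp (RtoC t0 * h))%C) /\
  derivable_pt_lim (fun t => snd (cexp (RtoC t * h)%C)) t0 (snd (h * cexp (RtoC t0 * h))%C).
Proof.
  destruct h as [a b]. split; apply is_derive_Reals; unfold cexp; simpl.
  - auto_derive; [exact I|]. unfold Rminus. ring.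
  - auto_derive; [exact I|]. unfold Rminus. ring.
Qed.

Lemma taylor_bound (n : nat) : forall h : C,
  Cmod (Rm n h) <= Cmod h ^ n * exp (Rmax 0 (fst h)).
Proof.
  induction n as [|n IH]; intros h.
  - unfold Rm. simpl. replace (cexp h - 0)%C with (cexp h) by ring.
    rewrite Cmod_cexp, Rmult_1_l. apply exp_mono, Rmax_r.
  - set (g := fun t => Rm (S n) (RtoC t * h)%C).
    set (dg := fun t => (h * Rm n (RtoC t * h))%C).
    assert (Hg : Cmod (g 1 - g 0)%C <= Cmod h ^ S n * exp (Rmax 0 (fst h))).
    { apply ray_mvt with (dg := dg).
      - intros t. unfold g, dg, Rm.
        destruct (cexp_ray h t) as [H1 _].
        destruct (ray_deriv (Tp (S n)) (Tp n (RtoC t * h)%C) h t (isd_Tp n _)) as [H2 _].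
        eapply dpl_ext; [| |exact (derivable_pt_lim_minus _ _ t _ _ H1 H2)].
        + intros s. reflexivity.
        + simpl. ring.
      - intros t. unfold g, dg, Rm.
        destruct (cexp_ray h t) as [_ H1].
        destruct (ray_deriv (Tp (S n)) (Tp n (RtoC t * h)%C) h t (isd_Tp n _)) as [_ H2].
        eapply dpl_ext; [| |exact (derivable_pt_lim_minus _ _ t _ _ H1 H2)].
        + intros s. reflexivity.
        + simpl. ring.
      - intros t Ht. unfold dg. rewrite Cmod_mult.
        eapply Rle_trans. apply Rmult_le_compat_l. apply Cmod_ge_0. apply IH.
        rewrite Cmod_mult, Cmod_R, Rabs_pos_eq by lra.
        assert (Hh := Cmod_ge_0 h).
        assert (E1 : (t * Cmod h) ^ n <= Cmod h ^ n) by (apply pow_incr; nra).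
        assert (E2 : exp (Rmax 0 (fst (RtoC t * h)%C)) <= exp (Rmax 0 (fst h))).
        { apply exp_mono. simpl. replace (t * fst h - 0 * snd h) with (t * fst h) by ring.
          unfold Rmax. destruct (Rle_dec 0 (t * fst h)), (Rle_dec 0 (fst h)); nra. }
        simpl in E2 |- *.
        set (A := (t * Cmod h) ^ n) in *. set (A' := Cmod h ^ n) in *.
        set (B := exp (Rmax 0 (t * fst h - 0 * snd h))) in *. set (B' := exp (Rmax 0 (fst h))) in *.
        assert (0 <= A) by (apply pow_le; nra).
        assert (0 <= B) by (apply Rlt_le, exp_pos).
        assert (A * B <= A' * B') by (apply Rmult_le_compat; auto).
        rewrite Rmult_assoc. apply Rmult_le_compat_l; auto. }
    unfold g in Hg.
    replace (RtoC 1 * h)%C with h in Hg by ring.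
    replace (RtoC 0 * h)%C with (RtoC 0) in Hg by ring.
    unfold Rm at 2 in Hg. rewrite Tp_0, cexp_0 in Hg.
    replace (Rm (S n) h - (RtoC 1 - RtoC 1))%C with (Rm (S n) h) in Hg by ring.
    exact Hg.
Qed.

Lemma Rm1 h : Rm 1 h = (cexp h - 1)%C.
Proof. unfold Rm. simpl. change (cexp h - (0 + RtoC 1 / RtoC 1) = cexp h - RtoC 1)%C. field. Qed.
Lemma Rm2 h : Rm 2 h = (cexp h - 1 - h)%C.
Proof. unfold Rm. simpl. field. Qed.
Lemma Rm3 h : Rm 3 h = (cexp h - 1 - h - h * h / 2)%C.
Proof. unfold Rm. simpl. replace (RtoC (1+1)) with (RtoC 2) by (f_equal; ring). field. Qed.
Lemma Rm4 h : Rm 4 h = (cexp h - 1 - h - h * h / 2 - h * h * h / 6)%C.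
Proof. unfold Rm. simpl. replace (RtoC (1+1)) with (RtoC 2) by (f_equal; ring).
  replace (RtoC (1+1+1+1+1+1)) with (RtoC 6) by (f_equal; ring). field. Qed.

Lemma fst_le_Cmod (h : C) : fst h <= Cmod h.
Proof. assert (H := re_le_Cmod h). unfold Re in H. apply Rle_trans with (Rabs (fst h)); [apply Rle_abs|auto]. Qed.

Lemma exp_Rmax_le (h : C) : Cmod h <= 1 -> exp (Rmax 0 (fst h)) <= 3.
Proof.
  intros H. apply Rle_trans with (exp 1); [|apply exp_le_3]. apply exp_mono.
  apply Rmax_lub; [lra|]. apply Rle_trans with (Cmod h); auto. apply fst_le_Cmod.
Qed.

Lemma Rm_small n h : Cmod h <= 1 -> Cmod (Rm n h) <= 3 * Cmod h ^ n.
Proof.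
  intros H. eapply Rle_trans; [apply taylor_bound|].
  assert (0 <= Cmod h ^ n) by (apply pow_le, Cmod_ge_0).
  rewrite Rmult_comm. apply Rmult_le_compat_r; auto. apply exp_Rmax_le; auto.
Qed.

Lemma isd_of_quad (f : C -> C) z l K : 0 <= K ->
  (forall h, Cmod h <= 1 -> Cmod (f (z+h) - f z - h*l)%C <= K * (Cmod h * Cmod h)) ->
  @is_derive C_AbsRing (AbsRing_NormedModule C_AbsRing) f z l.
Proof.
  intros HK H. apply isd_of_small. intros eps Heps.
  exists (Rmin 1 (eps / (K + 1))). split.
  { apply Rmin_glb_lt; [lra|apply Rdiv_lt_0_compat; lra]. }
  intros h Hh.
  assert (H1 : Cmod h < 1) by (eapply Rlt_le_trans; [exact Hh|apply Rmin_l]).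
  assert (H2 : Cmod h < eps / (K + 1)) by (eapply Rlt_le_trans; [exact Hh|apply Rmin_r]).
  eapply Rle_trans; [apply H; lra|].
  assert (H0 := Cmod_ge_0 h).
  apply Rmult_lt_compat_r with (r := K + 1) in H2; [|lra].
  replace (eps / (K + 1) * (K + 1)) with eps in H2 by (field; lra).
  nra.
Qed.

Lemma isd_cexp z : @is_derive C_AbsRing (AbsRing_NormedModule C_AbsRing) cexp z (cexp z).
Proof.
  apply isd_of_quad with (K := Cmod (cexp z) * 3). { assert (H:=Cmod_ge_0 (cexp z)). lra. }
  intros h Hh.
  replace (cexp (z + h) - cexp z - h * cexp z)%C with (cexp z * Rm 2 h)%C
    by (rewrite Rm2, cexp_add; ring).
  rewrite Cmod_mult. assert (H:=Cmod_ge_0 (cexp z)).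
  rewrite Rmult_assoc. apply Rmult_le_compat_l; auto.
  eapply Rle_trans; [apply Rm_small; auto|]. simpl. lra.
Qed.

Lemma hol_cexp z : hol cexp z.
Proof. exists (cexp z). apply isd_cexp. Qed.

Definition E1 (w : C) : C := if Ceq_dec w (RtoC 0) then RtoC 1 else ((cexp w - 1) / w)%C.
Definition E2 (w : C) : C := if Ceq_dec w (RtoC 0) then RtoC (/2) else ((cexp w - 1 - w) / (w * w))%C.

Lemma E1_nz w : w <> RtoC 0 -> E1 w = ((cexp w - 1) / w)%C.
Proof. intros H. unfold E1. destruct (Ceq_dec w (RtoC 0)); tauto. Qed.
Lemma E2_nz w : w <> RtoC 0 -> E2 w = ((cexp w - 1 - w) / (w * w))%C.
Proof. intros H. unfold E2. destruct (Ceq_dec w (RtoC 0)); tauto. Qed.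

Lemma hol_away (f g : C -> C) z : z <> RtoC 0 -> (forall w, w <> RtoC 0 -> f w = g w) -> hol g z -> hol f z.
Proof.
  intros Hz E Hg. apply hol_ext_loc with g; auto.
  exists (Cmod z). split; [apply Cmod_gt_0; auto|].
  intros w Hw. symmetry. apply E. intros ->.
  replace (RtoC 0 - z)%C with (- z)%C in Hw by ring. rewrite Cmod_opp in Hw. lra.
Qed.

Lemma hol_E1 z : hol E1 z.
Proof.
  destruct (Ceq_dec z (RtoC 0)) as [->|Hz].
  - exists (RtoC (/2)). apply isd_of_quad with (K := 3); [lra|].
    intros h Hh. replace (RtoC 0 + h)%C with h by ring.
    unfold E1 at 2. destruct (Ceq_dec (RtoC 0) (RtoC 0)) as [_|n]; [|tauto].
    destruct (Ceq_dec h (RtoC 0)) as [->|Hh0].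
    + unfold E1. destruct (Ceq_dec (RtoC 0) (RtoC 0)) as [_|n]; [|tauto].
      replace (RtoC 1 - RtoC 1 - RtoC 0 * RtoC (/ 2))%C with (RtoC 0) by ring.
      rewrite Cmod_0. assert (H:=Cmod_ge_0 (RtoC 0)). nra.
    + rewrite E1_nz by auto.
      replace ((cexp h - 1) / h - RtoC 1 - h * RtoC (/ 2))%C with (Rm 3 h / h)%C.
      2:{ rewrite Rm3. rewrite RtoC_inv by lra. field. auto. }
      rewrite Cmod_div by auto.
      assert (Hp : 0 < Cmod h) by (apply Cmod_gt_0; auto).
      apply Rle_div_l; auto. eapply Rle_trans; [apply Rm_small; auto|]. simpl. right. ring.
  - apply hol_away with (fun w => (cexp w - 1) / w)%C; auto.
    + intros w Hw. apply E1_nz; auto.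
    + apply hol_div; auto. apply hol_minus; [apply hol_cexp|apply hol_const]. apply hol_id.
Qed.

Lemma hol_E2 z : hol E2 z.
Proof.
  destruct (Ceq_dec z (RtoC 0)) as [->|Hz].
  - exists (RtoC (/6)). apply isd_of_quad with (K := 3); [lra|].
    intros h Hh. replace (RtoC 0 + h)%C with h by ring.
    unfold E2 at 2. destruct (Ceq_dec (RtoC 0) (RtoC 0)) as [_|n]; [|tauto].
    destruct (Ceq_dec h (RtoC 0)) as [->|Hh0].
    + unfold E2. destruct (Ceq_dec (RtoC 0) (RtoC 0)) as [_|n]; [|tauto].
      replace (RtoC (/2) - RtoC (/2) - RtoC 0 * RtoC (/ 6))%C with (RtoC 0) by ring.
      rewrite Cmod_0. assert (H:=Cmod_ge_0 (RtoC 0)). nra.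
    + rewrite E2_nz by auto.
      replace ((cexp h - 1 - h) / (h * h) - RtoC (/2) - h * RtoC (/ 6))%C with (Rm 4 h / (h * h))%C.
      2:{ rewrite Rm4. rewrite !RtoC_inv by lra. field. auto. }
      rewrite Cmod_div by (apply Cmult_neq_0; auto). rewrite Cmod_mult.
      assert (Hp : 0 < Cmod h) by (apply Cmod_gt_0; auto).
      apply Rle_div_l; [nra|]. eapply Rle_trans; [apply Rm_small; auto|]. simpl. right. ring.
  - apply hol_away with (fun w => (cexp w - 1 - w) / (w * w))%C; auto.
    + intros w Hw. apply E2_nz; auto.
    + apply hol_div; [| |apply Cmult_neq_0; auto].
      * apply hol_minus; [apply hol_minus; [apply hol_cexp|apply hol_const]|apply hol_id].
      * apply hol_mult; apply hol_id.
Qed.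

Lemma E1_bound w : Cmod (E1 w) <= exp (Rmax 0 (fst w)).
Proof.
  destruct (Ceq_dec w (RtoC 0)) as [->|Hw].
  - unfold E1. destruct (Ceq_dec (RtoC 0) (RtoC 0)) as [_|n]; [|tauto].
    rewrite Cmod_R, Rabs_R1. apply Rle_trans with (exp 0); [rewrite exp_0; lra|]. apply exp_mono, Rmax_l.
  - rewrite E1_nz by auto. rewrite <- Rm1. rewrite Cmod_div by auto.
    assert (Hp : 0 < Cmod w) by (apply Cmod_gt_0; auto).
    apply Rle_div_l; auto. eapply Rle_trans; [apply taylor_bound|]. simpl. right. ring.
Qed.

Lemma E2_bound w : Cmod (E2 w) <= exp (Rmax 0 (fst w)).
Proof.
  destruct (Ceq_dec w (RtoC 0)) as [->|Hw].
  - unfold E2. destruct (Ceq_dec (RtoC 0) (RtoC 0)) as [_|n]; [|tauto].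
    rewrite Cmod_R. apply Rle_trans with (exp 0); [rewrite exp_0, Rabs_pos_eq; lra|]. apply exp_mono, Rmax_l.
  - rewrite E2_nz by auto. rewrite <- Rm2. rewrite Cmod_div by (apply Cmult_neq_0; auto). rewrite Cmod_mult.
    assert (Hp : 0 < Cmod w) by (apply Cmod_gt_0; auto).
    apply Rle_div_l; [nra|]. eapply Rle_trans; [apply taylor_bound|]. simpl. right. ring.
Qed.


Definition ae (eps : R) : C := RtoC (exp (- eps)).
Definition cst (eps : R) : C := (4 * (ae eps - 1) - 4 * RtoC eps * ae eps)%C.
Definition uU (eps : R) (z : C) : C := (Ci * RtoC eps * (z - Ci))%C.
Definition uL (eps : R) (z : C) : C := (- (Ci * RtoC eps * (z + Ci)))%C.

Definition P11 eps z : C :=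
  (- 8 * RtoC eps * ae eps * E1 (uU eps z) + 8 * RtoC eps * RtoC eps * ae eps * E2 (uU eps z) - cst eps)%C.
Definition Qp eps z : C := ((Ci * (ae eps - 1) - RtoC eps * ae eps * z * E1 (uU eps z)) / (z + Ci))%C.
Definition P21 eps z : C := ((6 * Ci * (ae eps - 1) - 4 * RtoC eps * ae eps * z * E1 (uU eps z)) / (z + Ci))%C.
Definition M22 eps z : C :=
  (- 8 * RtoC eps * ae eps * E1 (uL eps z) + 8 * RtoC eps * RtoC eps * ae eps * E2 (uL eps z) - cst eps)%C.
Definition Qm eps z : C := ((Ci * (ae eps - 1) + RtoC eps * ae eps * z * E1 (uL eps z)) / (z - Ci))%C.
Definition M21 eps z : C := ((6 * Ci * (ae eps - 1) + 8 * RtoC eps * ae eps * z * E1 (uL eps z)) / (z - Ci))%C.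

Definition Npf (eps : R) (z : C) : M2 :=
  mkM2 (P11 eps z) (- (3/2) * P11 eps z)%C (P21 eps z) (- 8 * Qp eps z + cst eps)%C.
Definition Nmf (eps : R) (z : C) : M2 :=
  mkM2 (8 * Qm eps z + cst eps)%C ((3/2) * M22 eps z)%C (M21 eps z) (M22 eps z).

Lemma Ci2 : (Ci * Ci = - 1)%C.
Proof. apply injective_projections; simpl; ring. Qed.

Lemma test (x y : C) : (x * Ci * Ci * y + x * y = 0)%C.
Proof. ring [Ci2]. Qed.

Lemma D_Cadd : Defs.Cadd = Cplus. Proof. reflexivity. Qed.
Lemma D_Cmul : Defs.Cmul = Cmult. Proof. reflexivity. Qed.
Lemma D_Csub : Defs.Csub = Cminus. Proof. reflexivity. Qed.
Lemma D_Copp : Defs.Copp = Copp. Proof. reflexivity. Qed.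
Lemma D_Cdiv : Defs.Cdiv = Cdiv. Proof. reflexivity. Qed.
Lemma D_Cinv : Defs.Cinv = Cinv. Proof. reflexivity. Qed.
Lemma D_Cmod : Defs.Cmod = Cmod. Proof. reflexivity. Qed.
Lemma D_C0 : Defs.C0 = RtoC 0. Proof. reflexivity. Qed.
Lemma D_C1 : Defs.C1 = RtoC 1. Proof. reflexivity. Qed.
Lemma D_Ci : Defs.Ci = Ci. Proof. reflexivity. Qed.
Lemma D_RtoC : Defs.RtoC = RtoC. Proof. reflexivity. Qed.

Ltac toC := rewrite ?D_Cadd, ?D_Cmul, ?D_Csub, ?D_Copp, ?D_Cdiv, ?D_Cinv, ?D_Cmod, ?D_C0, ?D_C1, ?D_Ci, ?D_RtoC.

Lemma uU_R eps x : uU eps (RtoC x) = (eps, eps * x).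
Proof. unfold uU. apply injective_projections; simpl; ring. Qed.
Lemma uL_R eps x : uL eps (RtoC x) = (eps, - (eps * x)).
Proof. unfold uL. apply injective_projections; simpl; ring. Qed.

Lemma cexp_uU eps x : cexp (uU eps (RtoC x)) = (RtoC (exp eps) * Cexpi (eps * x))%C.
Proof. rewrite uU_R. unfold cexp, Cexpi. apply injective_projections; simpl; ring. Qed.
Lemma cexp_uL eps x : cexp (uL eps (RtoC x)) = (RtoC (exp eps) * Cexpi (- (eps * x)))%C.
Proof. rewrite uL_R. unfold cexp, Cexpi. apply injective_projections; simpl; ring. Qed.

Lemma uU_nz eps x : 0 < eps -> uU eps (RtoC x) <> RtoC 0.
Proof. intros H E. rewrite uU_R in E. injection E. lra. Qed.
Lemma uL_nz eps x : 0 < eps -> uL eps (RtoC x) <> RtoC 0.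
Proof. intros H E. rewrite uL_R in E. injection E. lra. Qed.

Lemma xpi_nz x : (RtoC x + Ci)%C <> RtoC 0.
Proof. intros E. injection E. lra. Qed.
Lemma xmi_nz x : (RtoC x - Ci)%C <> RtoC 0.
Proof. intros E. injection E. lra. Qed.


Lemma CiSS n : (Ci ^ (S (S n)) = - Ci ^ n)%C.
Proof. change (Ci * (Ci * Ci ^ n) = - Ci ^ n)%C. rewrite Cmult_assoc, Ci2. ring. Qed.
Lemma Ci1 : (Ci ^ 1 = Ci)%C. Proof. apply Cpow_1_r. Qed.
Lemma Ci0 : (Ci ^ 0 = 1)%C. Proof. reflexivity. Qed.
Lemma Cpow2 : (Ci ^ 2 = -1)%C. Proof. apply injective_projections; simpl; ring. Qed.
Lemma Cpow3 : (Ci ^ 3 = - Ci)%C. Proof. apply injective_projections; simpl; ring. Qed.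
Lemma Cpow4 : (Ci ^ 4 = 1)%C. Proof. apply injective_projections; simpl; ring. Qed.
Lemma Cpow5 : (Ci ^ 5 = Ci)%C. Proof. apply injective_projections; simpl; ring. Qed.
Lemma Cpow6 : (Ci ^ 6 = -1)%C. Proof. apply injective_projections; simpl; ring. Qed.
Lemma Cpow7 : (Ci ^ 7 = - Ci)%C. Proof. apply injective_projections; simpl; ring. Qed.
Lemma Cpow8 : (Ci ^ 8 = 1)%C. Proof. apply injective_projections; simpl; ring. Qed.

Ltac prep_id eps x He :=
  unfold M2add, M2mul, M2sub, Lamp, Lamm, Lam, M2diag, Geps, Npf, Nmf, b; cbv beta zeta;
  simpl m11; simpl m12; simpl m21; simpl m22;
  toC; unfold P11, P21, M22, M21, Qp, Qm, cst, ae;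
  rewrite ?E1_nz, ?E2_nz by (apply uU_nz || apply uL_nz; auto);
  rewrite ?cexp_uU, ?cexp_uL; unfold uU, uL;
  rewrite exp_Ropp, RtoC_inv by (apply Rgt_not_eq, exp_pos);
  rewrite ?RtoC_plus, ?RtoC_mult;
  replace (RtoC x * (RtoC x * RtoC 1) + RtoC 1)%C with ((RtoC x + Ci) * (RtoC x - Ci))%C by ring [Ci2];
  let H1 := fresh in let H2 := fresh in let H3 := fresh in let H4 := fresh in let H5 := fresh in
  assert (H1 := xpi_nz x); assert (H2 := xmi_nz x);
  assert (H3 : RtoC (exp eps) <> RtoC 0) by (let E := fresh in intro E; injection E; apply Rgt_not_eq, exp_pos);
  assert (H4 : RtoC eps <> RtoC 0) by (let E := fresh in intro E; injection E; lra);
  assert (H5 := Ci_nz);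
  set (S := Cexpi (eps * x)); set (T := Cexpi (- (eps * x)));
  match goal with |- ?a = ?b => change (@eq C a b) end;
  field_simplify_eq; try (cbv beta; repeat rewrite CiSS; rewrite ?Ci1, ?Ci0;
     match goal with |- ?a = ?b => change (@eq C a b) end; ring); try (repeat split; auto).

Lemma id_R eps x : 0 < eps ->
  M2add (M2mul (Lamp (RtoC x)) (Npf eps (RtoC x))) (M2mul (Nmf eps (RtoC x)) (Lamm (RtoC x)))
  = M2sub (Geps eps x) (Lam (RtoC x)).
Proof.
  intros He.
  match goal with |- ?A = ?B => transitivity (mkM2 (m11 A) (m12 A) (m21 A) (m22 A));
     [reflexivity|transitivity (mkM2 (m11 B) (m12 B) (m21 B) (m22 B)); [|reflexivity]] end.
  f_equal.
  - prep_id eps x He.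
  - prep_id eps x He.
  - prep_id eps x He.
  - prep_id eps x He.
Qed.

Lemma hol_E1c g z : hol g z -> hol (fun w => E1 (g w)) z.
Proof. intros H. apply (hol_comp E1 g z); auto. apply hol_E1. Qed.
Lemma hol_E2c g z : hol g z -> hol (fun w => E2 (g w)) z.
Proof. intros H. apply (hol_comp E2 g z); auto. apply hol_E2. Qed.

Ltac solve_hol :=
  match goal with
  | |- hol (fun w => w) _ => apply hol_id
  | |- hol (fun w => E1 (@?g w)) _ => apply (hol_E1c g); solve_hol
  | |- hol (fun w => E2 (@?g w)) _ => apply (hol_E2c g); solve_hol
  | |- hol (fun w => Cplus (@?f w) (@?g w)) _ => apply (hol_plus f g); solve_hol
  | |- hol (fun w => Cminus (@?f w) (@?g w)) _ => apply (hol_minus f g); solve_hol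
  | |- hol (fun w => Cmult (@?f w) (@?g w)) _ => apply (hol_mult f g); solve_hol
  | |- hol (fun w => Copp (@?f w)) _ => apply (hol_opp f); solve_hol
  | |- hol (fun w => Cdiv (@?f w) (@?g w)) _ => apply (hol_div f g); [solve_hol|solve_hol|]
  | |- hol (fun w => ?c) _ => exact (hol_const c _)
  end.

Lemma zpi_nz (z : C) : 0 <= snd z -> (z + Ci)%C <> RtoC 0.
Proof. intros H E. apply (f_equal snd) in E. simpl in E. lra. Qed.
Lemma zmi_nz (z : C) : snd z <= 0 -> (z - Ci)%C <> RtoC 0.
Proof. intros H E. apply (f_equal snd) in E. simpl in E. lra. Qed.

Lemma RtoC2_nz : RtoC 2 <> RtoC 0.
Proof. intros E. apply (f_equal fst) in E. simpl in E. lra. Qed.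
#[export] Hint Resolve RtoC2_nz : core.

Lemma hol_Np eps z : 0 <= snd z ->
  hol (fun w => m11 (Npf eps w)) z /\ hol (fun w => m12 (Npf eps w)) z /\
  hol (fun w => m21 (Npf eps w)) z /\ hol (fun w => m22 (Npf eps w)) z.
Proof.
  intros Hz. assert (Hn := zpi_nz z Hz). unfold Npf; simpl m11; simpl m12; simpl m21; simpl m22.
  unfold P11, P21, Qp, cst, ae, uU.
  repeat split; solve_hol; cbv beta; auto.
Qed.

Lemma hol_Nm eps z : snd z <= 0 ->
  hol (fun w => m11 (Nmf eps w)) z /\ hol (fun w => m12 (Nmf eps w)) z /\
  hol (fun w => m21 (Nmf eps w)) z /\ hol (fun w => m22 (Nmf eps w)) z.
Proof.
  intros Hz. assert (Hn := zmi_nz z Hz). unfold Nmf; simpl m11; simpl m12; simpl m21; simpl m22.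
  unfold M22, M21, Qm, cst, ae, uL.
  repeat split; solve_hol; cbv beta; auto.
Qed.

Lemma Ccont_of_hol (D : Cx -> Prop) (f : Cx -> Cx) : (forall z, D z -> hol f z) -> Ccont_on D f.
Proof.
  intros H z Dz e He. destruct (hol_continuous f z (H z Dz) e He) as [d [Hd Hc]].
  exists d. split; auto.
Qed.

Lemma Cholo_of_hol (D : Cx -> Prop) (f : Cx -> Cx) : (forall z, D z -> hol f z) -> Cholo_on D f.
Proof.
  intros H z Dz. destruct (H z Dz) as [l Hl]. exists l. intros e He.
  destruct (small_of_isd f z l Hl (e/2)) as [d [Hd Hs]]; [lra|].
  exists d. split; auto. intros h Hh0 Hh. toC.
  rewrite D_C0 in Hh0.
  assert (Hp : 0 < Cmod h) by (apply Cmod_gt_0; auto).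
  replace ((f (z + h)%C - f z) / h - l)%C with ((f (z + h)%C - f z - h * l) / h)%C by (field; auto).
  rewrite Cmod_div by auto. apply Rlt_div_l; auto.
  eapply Rle_lt_trans; [apply Hs; auto|]. nra.
Qed.

Lemma Cmod_add_le a b A B : Cmod a <= A -> Cmod b <= B -> Cmod (a + b)%C <= A + B.
Proof. intros. eapply Rle_trans; [apply Cmod_triangle|lra]. Qed.
Lemma Cmod_sub_le a b A B : Cmod a <= A -> Cmod b <= B -> Cmod (a - b)%C <= A + B.
Proof. intros. eapply Rle_trans; [apply Cmod_triangle|]. rewrite Cmod_opp. lra. Qed.
Lemma Cmod_mul_le a b A B : Cmod a <= A -> Cmod b <= B -> Cmod (a * b)%C <= A * B.
Proof. intros. rewrite Cmod_mult. apply Rmult_le_compat; auto; apply Cmod_ge_0. Qed.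
Lemma Cmod_opp_le a A : Cmod a <= A -> Cmod (- a)%C <= A.
Proof. intros. rewrite Cmod_opp. auto. Qed.
Lemma Cmod_IZR_le z : Cmod (RtoC (IZR z)) <= IZR (Z.abs z).
Proof. rewrite Cmod_R, <- abs_IZR. lra. Qed.
Lemma Cmod_Ci_le : Cmod Ci <= 1.
Proof. unfold Cmod. cbn [fst snd Ci]. replace (0 ^ 2 + 1 ^ 2) with 1 by ring. rewrite sqrt_1. lra. Qed.
Lemma Cmod_32 : Cmod (RtoC 3 / RtoC 2)%C <= 3/2.
Proof. rewrite Cmod_div, !Cmod_R, !Rabs_pos_eq; try lra. apply RtoC2_nz. Qed.
Lemma Cmod_div_le n d K : d <> RtoC 0 -> Cmod n <= K * Cmod d -> Cmod (n / d)%C <= K.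
Proof. intros Hd H. rewrite Cmod_div by auto. assert (0 < Cmod d) by (apply Cmod_gt_0; auto).
  apply Rle_div_l; auto. Qed.

Lemma Cmod_ae1 eps : 0 <= eps -> Cmod (ae eps - 1)%C <= eps.
Proof.
  intros H. unfold ae. rewrite <- RtoC_minus, Cmod_R.
  assert (H1 := exp_ineq1_le (- eps)).
  assert (H2 : exp (- eps) <= 1) by (rewrite <- exp_0; apply exp_mono; lra).
  rewrite Rabs_left1; lra.
Qed.
Lemma Cmod_ae eps : 0 <= eps -> Cmod (ae eps) <= 1.
Proof.
  intros H. unfold ae. rewrite Cmod_R, Rabs_pos_eq by (apply Rlt_le, exp_pos).
  rewrite <- exp_0; apply exp_mono; lra.
Qed.
Lemma Cmod_eps eps : 0 <= eps -> Cmod (RtoC eps) <= eps.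
Proof. intros H. rewrite Cmod_R, Rabs_pos_eq; lra. Qed.

Lemma fst_uU eps z : fst (uU eps z) = eps * (1 - snd z).
Proof. unfold uU. simpl. ring. Qed.
Lemma fst_uL eps z : fst (uL eps z) = eps * (1 + snd z).
Proof. unfold uL. simpl. ring. Qed.

Lemma exp_bnd3 r : r <= 1 -> exp (Rmax 0 r) <= 3.
Proof. intros H. apply Rle_trans with (exp 1); [|apply exp_le_3]. apply exp_mono. apply Rmax_lub; lra. Qed.

Lemma E1U eps z : 0 <= eps <= 1 -> 0 <= snd z -> Cmod (E1 (uU eps z)) <= 3.
Proof. intros He Hz. eapply Rle_trans; [apply E1_bound|]. apply exp_bnd3. rewrite fst_uU. nra. Qed.
Lemma E2U eps z : 0 <= eps <= 1 -> 0 <= snd z -> Cmod (E2 (uU eps z)) <= 3.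
Proof. intros He Hz. eapply Rle_trans; [apply E2_bound|]. apply exp_bnd3. rewrite fst_uU. nra. Qed.
Lemma E1L eps z : 0 <= eps <= 1 -> snd z <= 0 -> Cmod (E1 (uL eps z)) <= 3.
Proof. intros He Hz. eapply Rle_trans; [apply E1_bound|]. apply exp_bnd3. rewrite fst_uL. nra. Qed.
Lemma E2L eps z : 0 <= eps <= 1 -> snd z <= 0 -> Cmod (E2 (uL eps z)) <= 3.
Proof. intros He Hz. eapply Rle_trans; [apply E2_bound|]. apply exp_bnd3. rewrite fst_uL. nra. Qed.

Lemma Cmod_sq (w : C) : Cmod w * Cmod w = fst w ^ 2 + snd w ^ 2.
Proof. unfold Cmod. apply sqrt_sqrt. nra. Qed.

Lemma zU_le z : 0 <= snd z -> Cmod z <= Cmod (z + Ci)%C /\ 1 <= Cmod (z + Ci)%C.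
Proof.
  intros H. assert (A := Cmod_sq z). assert (B := Cmod_sq (z + Ci)%C). simpl in B.
  assert (0 <= Cmod z) by apply Cmod_ge_0. assert (0 <= Cmod (z + Ci)%C) by apply Cmod_ge_0.
  split; nra.
Qed.
Lemma zL_le z : snd z <= 0 -> Cmod z <= Cmod (z - Ci)%C /\ 1 <= Cmod (z - Ci)%C.
Proof.
  intros H. assert (A := Cmod_sq z). assert (B := Cmod_sq (z - Ci)%C). simpl in B.
  assert (0 <= Cmod z) by apply Cmod_ge_0. assert (0 <= Cmod (z - Ci)%C) by apply Cmod_ge_0.
  split; nra.
Qed.

Ltac bnd := match goal with
 | |- Cmod (RtoC (IZR _)) <= _ => apply Cmod_IZR_le
 | |- Cmod (ae _ - _)%C <= _ => apply Cmod_ae1; lra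
 | |- Cmod (RtoC 3 / RtoC 2)%C <= _ => apply Cmod_32
 | |- Cmod Ci <= _ => apply Cmod_Ci_le
 | |- Cmod (?a + ?b)%C <= _ => eapply Cmod_add_le; [bnd|bnd]
 | |- Cmod (?a - ?b)%C <= _ => eapply Cmod_sub_le; [bnd|bnd]
 | |- Cmod (?a * ?b)%C <= _ => eapply Cmod_mul_le; [bnd|bnd]
 | |- Cmod (- ?a)%C <= _ => eapply Cmod_opp_le; bnd
 | |- Cmod _ <= _ => first [eassumption | apply Rle_refl]
 end.

Lemma cst_bnd eps : 0 <= eps -> Cmod (cst eps) <= 8 * eps.
Proof.
  intros He. assert (H1 := Cmod_ae1 eps He). assert (H2 := Cmod_ae eps He). assert (H3 := Cmod_eps eps He).
  unfold cst. eapply Rle_trans; [bnd|]. cbn [Z.abs]. nra.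
Qed.

Lemma Np_bnd eps z : 0 < eps <= 1 -> 0 <= snd z -> M2norm (Npf eps z) <= 84 * eps.
Proof.
  intros He Hz.
  assert (He' : 0 <= eps) by lra.
  assert (H1 := Cmod_ae1 eps He'). assert (H2 := Cmod_ae eps He'). assert (H3 := Cmod_eps eps He').
  assert (H4 := E1U eps z (conj He' (proj2 He)) Hz). assert (H5 := E2U eps z (conj He' (proj2 He)) Hz).
  assert (H6 := cst_bnd eps He'). destruct (zU_le z Hz) as [H7 H8].
  assert (Hn := zpi_nz z Hz).
  assert (B11 : Cmod (P11 eps z) <= 56 * eps).
  { unfold P11. eapply Rle_trans; [bnd|]. cbn [Z.abs]. nra. }
  assert (BQ : Cmod (Qp eps z) <= 4 * eps).
  { unfold Qp. apply Cmod_div_le; auto. eapply Rle_trans; [bnd|]. nra. }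
  unfold M2norm, Npf. cbn [m11 m12 m21 m22]. toC.
  repeat apply Rmax_lub.
  - lra.
  - eapply Rle_trans; [bnd|]. nra.
  - unfold P21. apply Cmod_div_le; auto. eapply Rle_trans; [bnd|]. cbn [Z.abs]. nra.
  - eapply Rle_trans; [bnd|]. cbn [Z.abs]. nra.
Qed.

Lemma Nm_bnd eps z : 0 < eps <= 1 -> snd z <= 0 -> M2norm (Nmf eps z) <= 84 * eps.
Proof.
  intros He Hz.
  assert (He' : 0 <= eps) by lra.
  assert (H1 := Cmod_ae1 eps He'). assert (H2 := Cmod_ae eps He'). assert (H3 := Cmod_eps eps He').
  assert (H4 := E1L eps z (conj He' (proj2 He)) Hz). assert (H5 := E2L eps z (conj He' (proj2 He)) Hz).
  assert (H6 := cst_bnd eps He'). destruct (zL_le z Hz) as [H7 H8].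
  assert (Hn := zmi_nz z Hz).
  assert (B22 : Cmod (M22 eps z) <= 56 * eps).
  { unfold M22. eapply Rle_trans; [bnd|]. cbn [Z.abs]. nra. }
  assert (BQ : Cmod (Qm eps z) <= 4 * eps).
  { unfold Qm. apply Cmod_div_le; auto. eapply Rle_trans; [bnd|]. nra. }
  unfold M2norm, Nmf. cbn [m11 m12 m21 m22]. toC.
  repeat apply Rmax_lub.
  - eapply Rle_trans; [bnd|]. cbn [Z.abs]. nra.
  - eapply Rle_trans; [bnd|]. nra.
  - unfold M21. apply Cmod_div_le; auto. eapply Rle_trans; [bnd|]. cbn [Z.abs]. nra.
  - lra.
Qed.

Lemma M2_ext (A B : M2) : m11 A = m11 B -> m12 A = m12 B -> m21 A = m21 B -> m22 A = m22 B -> A = B.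
Proof. destruct A, B; simpl; intros; subst; reflexivity. Qed.

Lemma solve_g (g x y : C) : x = (g - y)%C -> g = (x + y)%C.
Proof. intros ->. ring. Qed.

Ltac toC_all := rewrite ?D_Cadd, ?D_Cmul, ?D_Csub, ?D_Copp, ?D_Cdiv, ?D_Cinv, ?D_Cmod, ?D_C0, ?D_C1, ?D_Ci, ?D_RtoC in *.

Lemma resid_gen (bb : C) (N P G : M2) : bb <> RtoC 0 ->
  M2add (M2mul (M2diag bb Defs.C1) P) (M2mul N (M2diag Defs.C1 (Defs.Cinv bb))) = M2sub G (M2diag bb (Defs.Cinv bb)) ->
  M2sub G (M2mul (M2mul (M2add M2id (M2mul N (M2inv (M2diag bb Defs.C1)))) (M2diag bb (Defs.Cinv bb)))
                 (M2add M2id (M2mul (M2inv (M2diag Defs.C1 (Defs.Cinv bb))) P)))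
  = mkM2 (- (m11 N * m11 P + m12 N * m21 P))%C (- (m11 N * m12 P + m12 N * m22 P))%C
         (- (m21 N * m11 P + m22 N * m21 P))%C (- (m21 N * m12 P + m22 N * m22 P))%C.
Proof.
  intros Hb H.
  assert (E1 := f_equal m11 H). assert (E2 := f_equal m12 H).
  assert (E3 := f_equal m21 H). assert (E4 := f_equal m22 H). clear H.
  destruct N as [n1 n2 n3 n4], P as [p1 p2 p3 p4], G as [g1 g2 g3 g4].
  unfold M2add, M2mul, M2sub, M2diag, M2inv, M2det, M2id in *. cbn [m11 m12 m21 m22] in *. toC.
  apply M2_ext; cbn [m11 m12 m21 m22].
  all: toC_all.
  all: apply solve_g in E1; apply solve_g in E2; apply solve_g in E3; apply solve_g in E4.
  all: rewrite ?E1, ?E2, ?E3, ?E4.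
  all: match goal with |- ?a = ?b => change (@eq C a b) end.
  all: field; auto.
Qed.

Lemma n11 A : Cmod (m11 A) <= M2norm A.
Proof. unfold M2norm. toC. eapply Rle_trans; [apply Rmax_l|apply Rmax_l]. Qed.
Lemma n12 A : Cmod (m12 A) <= M2norm A.
Proof. unfold M2norm. toC. eapply Rle_trans; [apply Rmax_r|apply Rmax_l]. Qed.
Lemma n21 A : Cmod (m21 A) <= M2norm A.
Proof. unfold M2norm. toC. eapply Rle_trans; [apply Rmax_l|apply Rmax_r]. Qed.
Lemma n22 A : Cmod (m22 A) <= M2norm A.
Proof. unfold M2norm. toC. eapply Rle_trans; [apply Rmax_r|apply Rmax_r]. Qed.

Lemma M2norm_le A K : Cmod (m11 A) <= K -> Cmod (m12 A) <= K -> Cmod (m21 A) <= K -> Cmod (m22 A) <= K ->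
  M2norm A <= K.
Proof. intros. unfold M2norm. toC. repeat apply Rmax_lub; auto. Qed.

Lemma M2norm_mul A B : M2norm (M2mul A B) <= 2 * (M2norm A * M2norm B).
Proof.
  assert (H1 := n11 A). assert (H2 := n12 A). assert (H3 := n21 A). assert (H4 := n22 A).
  assert (G1 := n11 B). assert (G2 := n12 B). assert (G3 := n21 B). assert (G4 := n22 B).
  apply M2norm_le; unfold M2mul; cbn [m11 m12 m21 m22]; toC;
  eapply Rle_trans; try (eapply Cmod_add_le; eapply Cmod_mul_le; eassumption); lra.
Qed.

Lemma inv_spec (F : M2) : M2det F <> Defs.C0 ->
  M2mul (M2inv F) F = M2id /\ M2mul F (M2inv F) = M2id.
Proof.
  intros H. destruct F as [a b c d]. unfold M2det, M2inv, M2mul, M2id in *. cbn [m11 m12 m21 m22] in *.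
  toC_all. split; apply M2_ext; cbn [m11 m12 m21 m22]; toC;
  match goal with |- ?x = ?y => change (@eq C x y) end; unfold M2det; cbn [m11 m12 m21 m22]; toC; match goal with |- ?x = ?y => change (@eq C x y) end; field; auto.
Qed.

Lemma Cmod_sub_ge (a b : C) : Cmod a - Cmod (a - b)%C <= Cmod b.
Proof.
  assert (E : a = ((a - b) + b)%C) by ring.
  assert (H := Cmod_triangle (a - b)%C b). rewrite <- E in H. lra.
Qed.

Lemma inv_bound (E : M2) eta : 0 <= eta <= 1/4 -> M2norm E <= eta ->
  M2det (M2add M2id E) <> Defs.C0 /\ M2norm (M2inv (M2add M2id E)) <= 4.
Proof.
  intros He HE.
  assert (H1 := n11 E). assert (H2 := n12 E). assert (H3 := n21 E). assert (H4 := n22 E).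
  destruct E as [e1 e2 e3 e4]. cbn [m11 m12 m21 m22] in *.
  assert (B1 : Cmod e1 <= eta) by lra. assert (B2 : Cmod e2 <= eta) by lra.
  assert (B3 : Cmod e3 <= eta) by lra. assert (B4 : Cmod e4 <= eta) by lra.
  clear H1 H2 H3 H4 HE.
  set (dt := M2det (M2add M2id (mkM2 e1 e2 e3 e4))).
  assert (Ed : dt = (1 + (e1 + e4 + e1 * e4 - e2 * e3))%C).
  { unfold dt, M2det, M2add, M2id. cbn [m11 m12 m21 m22]. toC.
    match goal with |- ?x = ?y => change (@eq C x y) end. ring. }
  assert (Hx : Cmod (e1 + e4 + e1 * e4 - e2 * e3)%C <= 2 * eta + 2 * (eta * eta)).
  { eapply Rle_trans. eapply Cmod_sub_le; [eapply Cmod_add_le; [eapply Cmod_add_le|]|];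
      try (eapply Cmod_mul_le); eassumption.
    nra. }
  assert (Hd : 3/8 <= Cmod dt).
  { rewrite Ed. assert (X := Cmod_sub_ge (RtoC 1) (1 + (e1 + e4 + e1 * e4 - e2 * e3))%C).
    replace (RtoC 1 - (1 + (e1 + e4 + e1 * e4 - e2 * e3)))%C with (- (e1 + e4 + e1 * e4 - e2 * e3))%C in X by ring.
    rewrite Cmod_opp, Cmod_R, Rabs_R1 in X. nra. }
  assert (Hdn : dt <> RtoC 0).
  { intros E. rewrite E, Cmod_0 in Hd. lra. }
  split. { toC. exact Hdn. }
  assert (Hi : Cmod (/ dt)%C <= 8/3).
  { rewrite Cmod_inv by auto. apply Rle_trans with (/ (3/8)). apply Rinv_le_contravar; lra. lra. }
  apply M2norm_le; unfold M2inv, M2add, M2id; cbn [m11 m12 m21 m22]; fold dt; toC;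
    (eapply Rle_trans; [eapply Cmod_mul_le; [exact Hi|bnd]|]); cbn [Z.abs]; lra.
Qed.

Lemma Cinv0 : Cinv (RtoC 0) = RtoC 0.
Proof. unfold Cinv. simpl. replace (0 * (0 * 1) + 0 * (0 * 1)) with 0 by ring. rewrite Rdiv_0_r.
  replace (- 0 / 0) with 0. reflexivity. unfold Rdiv. rewrite Rinv_0. ring. Qed.

Lemma Cinv_inv' (w : C) : Cinv (Cinv w) = w.
Proof. destruct (Ceq_dec w (RtoC 0)) as [->|H]. rewrite !Cinv0; auto. field. auto. Qed.

Lemma Cmod_invmul (w : C) : Cmod (/ w * w)%C <= 1.
Proof. destruct (Ceq_dec w (RtoC 0)) as [->|H]. rewrite Cmult_0_r, Cmod_0. lra.
  rewrite Cinv_l by auto. rewrite Cmod_R, Rabs_R1. lra. Qed.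

Lemma Cmod_zpi_le z : snd z <= 0 -> Cmod (z + Ci)%C <= Cmod (z - Ci)%C.
Proof. intros H. apply sqrt_le_1_alt. simpl. nra. Qed.
Lemma Cmod_zmi_le z : 0 <= snd z -> Cmod (z - Ci)%C <= Cmod (z + Ci)%C.
Proof. intros H. apply sqrt_le_1_alt. simpl. nra. Qed.

Lemma invb_lower z : snd z <= 0 -> Cmod (/ b z)%C <= 1.
Proof.
  intros Hz. unfold b. toC. assert (Hm := zmi_nz z Hz).
  destruct (Ceq_dec (z + Ci)%C (RtoC 0)) as [E|Hp].
  - rewrite E. unfold Cdiv. rewrite Cinv0, Cmult_0_r, Cinv0, Cmod_0. lra.
  - replace (/ ((z - Ci) / (z + Ci)))%C with ((z + Ci) / (z - Ci))%C by (field; auto).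
    rewrite Cmod_div by auto. assert (0 < Cmod (z - Ci)%C) by (apply Cmod_gt_0; auto).
    apply Rle_div_l; auto. rewrite Rmult_1_l. apply Cmod_zpi_le; auto.
Qed.

Lemma b_upper z : 0 <= snd z -> Cmod (b z) <= 1.
Proof.
  intros Hz. unfold b. toC. assert (Hp := zpi_nz z Hz).
  rewrite Cmod_div by auto. assert (0 < Cmod (z + Ci)%C) by (apply Cmod_gt_0; auto).
  apply Rle_div_l; auto. rewrite Rmult_1_l. apply Cmod_zmi_le; auto.
Qed.

Lemma det_s1 (w : C) : (w * RtoC 1 - RtoC 0 * RtoC 0)%C = w.
Proof. ring. Qed.
Lemma det_s2 (w : C) : (RtoC 1 * w - RtoC 0 * RtoC 0)%C = w.
Proof. ring. Qed.

Lemma invLamp_bnd z : snd z <= 0 -> M2norm (M2inv (Lamp z)) <= 1.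
Proof.
  intros Hz. assert (Hi := invb_lower z Hz).
  unfold Lamp, M2inv, M2det, M2diag. cbn [m11 m12 m21 m22]. toC.
  rewrite det_s1.
  apply M2norm_le; cbn [m11 m12 m21 m22].
  - rewrite Cmult_1_r. exact Hi.
  - replace (/ b z * - 0)%C with (RtoC 0) by ring. rewrite Cmod_0. lra.
  - replace (/ b z * - 0)%C with (RtoC 0) by ring. rewrite Cmod_0. lra.
  - apply Cmod_invmul.
Qed.

Lemma invLamm_bnd z : 0 <= snd z -> M2norm (M2inv (Lamm z)) <= 1.
Proof.
  intros Hz. assert (Hi := b_upper z Hz).
  unfold Lamm, M2inv, M2det, M2diag. cbn [m11 m12 m21 m22]. toC.
  rewrite det_s2.
  rewrite Cinv_inv'.
  apply M2norm_le; cbn [m11 m12 m21 m22].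
  - rewrite Cmult_comm. apply Cmod_invmul.
  - replace (b z * - 0)%C with (RtoC 0) by ring. rewrite Cmod_0. lra.
  - replace (b z * - 0)%C with (RtoC 0) by ring. rewrite Cmod_0. lra.
  - rewrite Cmult_1_r. exact Hi.
Qed.

Lemma b_R_nz x : b (RtoC x) <> RtoC 0.
Proof.
  unfold b. toC. intros E.
  assert (H1 := xpi_nz x). assert (H2 := xmi_nz x).
  apply (Cmult_neq_0 (RtoC x - Ci) (/ (RtoC x + Ci))); auto.
  intros E2. assert (E3 : ((RtoC x + Ci) * / (RtoC x + Ci))%C = RtoC 1) by (apply Cinv_r; auto).
  rewrite E2, Cmult_0_r in E3. apply (f_equal fst) in E3. simpl in E3. lra.
Qed.

Lemma good_Np eps : 0 < eps <= 1 -> M2_good upper_open upper_closed (Npf eps).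
Proof.
  intros He.
  assert (Hh : forall z, upper_closed z -> hol (fun w => m11 (Npf eps w)) z /\ hol (fun w => m12 (Npf eps w)) z /\
     hol (fun w => m21 (Npf eps w)) z /\ hol (fun w => m22 (Npf eps w)) z).
  { intros z Hz. apply hol_Np. exact Hz. }
  assert (Ho : forall z, upper_open z -> upper_closed z).
  { unfold upper_open, upper_closed. intros; lra. }
  split; [|split].
  - repeat split; apply Ccont_of_hol; intros z Hz; apply Hh; auto.
  - exists (84 * eps). intros z Hz. apply Np_bnd; auto.
  - repeat split; apply Cholo_of_hol; intros z Hz; apply Hh; auto.
Qed.

Lemma good_Nm eps : 0 < eps <= 1 -> M2_good lower_open lower_closed (Nmf eps).
Proof.
  intros He.
  assert (Hh : forall z, lower_closed z -> hol (fun w => m11 (Nmf eps w)) z /\ hol (fun w => m12 (Nmf eps w)) z /\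
     hol (fun w => m21 (Nmf eps w)) z /\ hol (fun w => m22 (Nmf eps w)) z).
  { intros z Hz. apply hol_Nm. exact Hz. }
  assert (Ho : forall z, lower_open z -> lower_closed z).
  { unfold lower_open, lower_closed. intros; lra. }
  split; [|split].
  - repeat split; apply Ccont_of_hol; intros z Hz; apply Hh; auto.
  - exists (84 * eps). intros z Hz. apply Nm_bnd; auto.
  - repeat split; apply Cholo_of_hol; intros z Hz; apply Hh; auto.
Qed.

Lemma resid_norm eps x : 0 < eps <= 1 ->
  M2norm (M2sub (Geps eps x)
         (M2mul (M2mul (M2add M2id (M2mul (Nmf eps (RtoC x)) (M2inv (Lamp (RtoC x)))))
                       (Lam (RtoC x)))
                (M2add M2id (M2mul (M2inv (Lamm (RtoC x))) (Npf eps (RtoC x))))))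
       <= 14112 * eps ^ 2.
Proof.
  intros He.
  assert (Hid := id_R eps x (proj1 He)).
  unfold Lamp, Lamm, Lam in *.
  rewrite (resid_gen (b (RtoC x)) _ _ _ (b_R_nz x) Hid).
  assert (P := Np_bnd eps (RtoC x) He (Rle_refl 0)).
  assert (N := Nm_bnd eps (RtoC x) He (Rle_refl 0)).
  assert (P1 := n11 (Npf eps (RtoC x))). assert (P2 := n12 (Npf eps (RtoC x))).
  assert (P3 := n21 (Npf eps (RtoC x))). assert (P4 := n22 (Npf eps (RtoC x))).
  assert (N1 := n11 (Nmf eps (RtoC x))). assert (N2 := n12 (Nmf eps (RtoC x))).
  assert (N3 := n21 (Nmf eps (RtoC x))). assert (N4 := n22 (Nmf eps (RtoC x))).
  set (K := 84 * eps) in *.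
  assert (Ka : Cmod (m11 (Npf eps (RtoC x))) <= K) by lra.
  assert (Kb : Cmod (m12 (Npf eps (RtoC x))) <= K) by lra.
  assert (Kc : Cmod (m21 (Npf eps (RtoC x))) <= K) by lra.
  assert (Kd : Cmod (m22 (Npf eps (RtoC x))) <= K) by lra.
  assert (Ke : Cmod (m11 (Nmf eps (RtoC x))) <= K) by lra.
  assert (Kf : Cmod (m12 (Nmf eps (RtoC x))) <= K) by lra.
  assert (Kg : Cmod (m21 (Nmf eps (RtoC x))) <= K) by lra.
  assert (Kh : Cmod (m22 (Nmf eps (RtoC x))) <= K) by lra.
  clear P N P1 P2 P3 P4 N1 N2 N3 N4.
  replace (14112 * eps ^ 2) with (K * K + K * K) by (unfold K; ring).
  apply M2norm_le; cbn [m11 m12 m21 m22];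
    apply Cmod_opp_le; apply Cmod_add_le; apply Cmod_mul_le; assumption.
Qed.

Import Pilot.Defs.

Theorem mainTheorem3 :
  exists (Np Nm : R -> Cx -> M2),
    (* for each eps in (0,1]: regularity and the additive identity on R *)
    (forall eps, 0 < eps <= 1 ->
       M2_good upper_open upper_closed (Np eps) /\
       M2_good lower_open lower_closed (Nm eps) /\
       forall x : R,
         M2add (M2mul (Lamp (RtoC x)) (Np eps (RtoC x)))
               (M2mul (Nm eps (RtoC x)) (Lamm (RtoC x)))
         = M2sub (Geps eps x) (Lam (RtoC x))) /\
    (* sup |N^+-| = O(eps) as eps -> 0 *)
    (exists K d, 0 < d /\ forall eps, 0 < eps <= d ->
       (forall z, upper_closed z -> M2norm (Np eps z) <= K * eps) /\
       (forall z, lower_closed z -> M2norm (Nm eps z) <= K * eps)) /\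
    (* sup_x || G_eps - (I + N^- (L^+)^-1) L (I + (L^-)^-1 N^+) || = O(eps^2) *)
    (exists K d, 0 < d /\ forall eps, 0 < eps <= d -> forall x : R,
       M2norm (M2sub (Geps eps x)
         (M2mul (M2mul (M2add M2id (M2mul (Nm eps (RtoC x)) (M2inv (Lamp (RtoC x)))))
                       (Lam (RtoC x)))
                (M2add M2id (M2mul (M2inv (Lamm (RtoC x))) (Np eps (RtoC x))))))
       <= K * eps ^ 2) /\
    (* for small eps the outer factors are invertible with bounded inverses *)
    (exists d, 0 < d /\ forall eps, 0 < eps <= d ->
       (exists Hm : Cx -> M2,
          M2bounded_on lower_closed Hm /\
          forall z, lower_closed z ->
            let F := M2add M2id (M2mul (Nm eps z) (M2inv (Lamp z))) in
            M2mul (Hm z) F = M2id /\ M2mul F (Hm z) = M2id) /\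
       (exists Hp : Cx -> M2,
          M2bounded_on upper_closed Hp /\
          forall z, upper_closed z ->
            let F := M2add M2id (M2mul (M2inv (Lamm z)) (Np eps z)) in
            M2mul (Hp z) F = M2id /\ M2mul F (Hp z) = M2id)).
Proof.
  exists Npf, Nmf. split; [|split; [|split]].
  - intros eps He. split; [apply good_Np; auto|split; [apply good_Nm; auto|]].
    intros x. apply id_R. lra.
  - exists 84, 1. split; [lra|]. intros eps He. split.
    + intros z Hz. apply Np_bnd; auto.
    + intros z Hz. apply Nm_bnd; auto.
  - exists 14112, 1. split; [lra|]. intros eps He x. apply resid_norm. auto.
  - exists (/1000). split; [lra|]. intros eps He.
    assert (He1 : 0 < eps <= 1) by lra.
    split.
    + exists (fun z => M2inv (M2add M2id (M2mul (Nmf eps z) (M2inv (Lamp z))))).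
      assert (B : forall z, lower_closed z ->
        M2det (M2add M2id (M2mul (Nmf eps z) (M2inv (Lamp z)))) <> C0 /\
        M2norm (M2inv (M2add M2id (M2mul (Nmf eps z) (M2inv (Lamp z))))) <= 4).
      { intros z Hz. apply inv_bound with (eta := 168 * eps); [lra|].
        eapply Rle_trans; [apply M2norm_mul|].
        assert (X := Nm_bnd eps z He1 Hz). assert (Y := invLamp_bnd z Hz).
        assert (0 <= M2norm (M2inv (Lamp z))) by (eapply Rle_trans; [apply Cmod_ge_0|apply n11]).
        assert (0 <= M2norm (Nmf eps z)) by (eapply Rle_trans; [apply Cmod_ge_0|apply n11]).
        nra. }
      split.
      * exists 4. intros z Hz. apply B; auto.
      * intros z Hz. cbv zeta. apply inv_spec. apply B; auto.
    + exists (fun z => M2inv (M2add M2id (M2mul (M2inv (Lamm z)) (Npf eps z)))).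
      assert (B : forall z, upper_closed z ->
        M2det (M2add M2id (M2mul (M2inv (Lamm z)) (Npf eps z))) <> C0 /\
        M2norm (M2inv (M2add M2id (M2mul (M2inv (Lamm z)) (Npf eps z)))) <= 4).
      { intros z Hz. apply inv_bound with (eta := 168 * eps); [lra|].
        eapply Rle_trans; [apply M2norm_mul|].
        assert (X := Np_bnd eps z He1 Hz). assert (Y := invLamm_bnd z Hz).
        assert (0 <= M2norm (M2inv (Lamm z))) by (eapply Rle_trans; [apply Cmod_ge_0|apply n11]).
        assert (0 <= M2norm (Npf eps z)) by (eapply Rle_trans; [apply Cmod_ge_0|apply n11]).
        nra. }
      split.
      * exists 4. intros z Hz. apply B; auto.
      * intros z Hz. cbv zeta. apply inv_spec. apply B; auto.
Qed.
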